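(* Assume $p,q\in[0,1]$. Let $n\ge3$, and let $v\in I_n$ and $w\in I_{n-1}$ be such that $d_{G_n}(v,w)=3$ and $\alpha_1(w)\cap\alpha_2(v)=\emptyset$ (i.e. $w$ is a distant relative of $v$). Let $(v,w',v',w)$ be a path of length three in $G_n$. Then $v'\in I_n$ and $|\sigma(v')|\ge3$.
   Context: Ulam–Harris labels: $\mathcal U_n=\mathbb N^n$ ($n\ge0$, $\mathcal U_0=\{\emptyset\}$), $\mathcal U=\bigcup_{n\ge0}\mathcal U_n$; for $u=u_1\dots u_k$ write $ui=u_1\dots u_ki$. Let $(\xi_u)_{u\in\mathcal U}$ be i.i.d. Poisson with mean $1+p$, and $(\delta_{u,v})_{u,v\in\mathcal U}$, $(\mu_{\{u,v\}})_{u\ne v\in\mathcal U}$ i.i.d. Bernoulli with mean $q$, all independent. The process $\mathcal G(p,q)=(G_n)_{n\ge0}$, $G_n=(V_n,E_n)$: $G_0=(\{\emptyset\},\emptyset)$, and $I_m=V_m\cap\mathcal U_m$. Given $G_{n-1}$ ($n\ge1$): (1) for $u\in I_{n-1}$ let $\mathcal K_u=\{v\in V_{n-1}:d_{G_{n-1}}(u,v)=3\}$ and $\mathcal C_u=\{j\in\mathbb N:j\le\xi_u,\ \delta_{v,uj}=0\ \forall v\in\mathcal K_u\}$; let $\tilde G_n$ have vertex set $V_{n-1}\cup\{ui:u\in I_{n-1},i\in\mathcal C_u\}$ and edge set $E_{n-1}\cup\{\{u,ui\}:u\in I_{n-1},i\in\mathcal C_u\}$, and $\tilde I_n$ its set of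 vertices in $\mathcal U_n$. (2) For $u,v\in\tilde I_n$ write $u\overset{m}{\sim}v$ iff $d_{\tilde G_n}(u,v)=4$ and $\mu_{\{u,v\}}=1$; let $\sim$ be the equivalence relation on $\tilde I_n$ generated by $\overset m\sim$, and $\pi(u)$ the lexicographically smallest element of the class of $u$. Then $V_n=V_{n-1}\cup\{\pi(u):u\in\tilde I_n\}$, $E_n=E_{n-1}\cup\{\{v,\pi(vi)\}:v\in I_{n-1},i\in\mathcal C_v\}$. For $x\in I_n$, $\alpha(x)=\bigcup_{0\le j\le n}\{y\in I_{n-j}:d_{G_n}(y,x)=j\}$ and $\alpha_i(x)=\alpha(x)\cap I_{n-i}$. For $x\in I_n$, $\sigma(x)=\{\tilde x\in\tilde I_n:\tilde x\sim x\}$ (the set of vertices of $\tilde I_n$ merged into $x$). *)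

(* Defs.v *)
From mathcomp Require Import all_boot.
From Stdlib Require Import Relations.
Set Implicit Arguments. Unset Strict Implicit. Unset Printing Implicit Defensive.

(* Ulam--Harris labels: u = u_1 ... u_k is the sequence [:: u_1; ...; u_k];
   generation = size; ui = rcons u i; the root is [::]. *)
Definition label := seq nat.

(* A graph with (possibly infinite-type) vertex and edge predicates.
   gE x y means that the (unordered) edge {x,y} is present. *)
Record graph := Graph { gV : label -> Prop; gE : label -> label -> Prop }.

Definition adj (G : graph) (x y : label) : Prop := gE G x y \/ gE G y x.

Inductive walk (A : label -> label -> Prop) : label -> label -> nat -> Prop :=
| walk0 x : walk A x x 0
| walkS x y z k : A x y -> walk A y z k -> walk A x z k.+1.

Definition dist (G : graph) (x y : label) (k : nat) : Prop :=
  walk (adj G) x y k /\ forall j, j < k -> ~ walk (adj G) x y j.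

Definition gen (G : graph) (m : nat) (x : label) : Prop := gV G x /\ size x = m.

Fixpoint lexle (s t : label) : bool :=
  match s, t with
  | [::], _ => true
  | _ :: _, [::] => false
  | a :: s', b :: t' => (a < b) || ((a == b) && lexle s' t')
  end.

Section Process.
(* a realization of (xi_u), (delta_{u,v}), (mu_{u,v}) *)
Variables (xi : label -> nat) (delta : label -> label -> bool)
          (mu : label -> label -> bool).

(* Everything below builds G_{m+1} from G = G_m (so n = m+1, n-1 = m). *)
Section Step.
Variables (m : nat) (G : graph).

Definition Kset (u v : label) : Prop := gV G v /\ dist G u v 3.

Definition Cset (u : label) (j : nat) : Prop :=
  [/\ 1 <= j, j <= xi u & forall v, Kset u v -> delta v (rcons u j) = false].

Definition tG : graph :=
  Graph (fun x => gV G x \/ exists u j, [/\ gen G m u, Cset u j & x = rcons u j])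
        (fun x y => gE G x y \/ exists u j, [/\ gen G m u, Cset u j, x = u & y = rcons u j]).

Definition tI (x : label) : Prop := gen tG m.+1 x.

Definition mrel (u v : label) : Prop := [/\ tI u, tI v, dist tG u v 4 & mu u v].

Definition sim : label -> label -> Prop := clos_refl_sym_trans label mrel.

Definition pi_rel (u x : label) : Prop :=
  [/\ tI x, sim u x & forall y, tI y -> sim u y -> lexle x y].

Definition step : graph :=
  Graph (fun x => gV G x \/ exists u, tI u /\ pi_rel u x)
        (fun x y => gE G x y \/
           exists v j, [/\ gen G m v, Cset v j, x = v & pi_rel (rcons v j) y]).

Definition sigma (x xt : label) : Prop := tI xt /\ sim xt x.
End Step.

Fixpoint Gproc (n : nat) : graph :=
  match n with
  | 0 => Graph (fun x => x = [::]) (fun _ _ => False)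
  | n'.+1 => step n' (Gproc n')
  end.

Definition alpha_i (k i : nat) (x y : label) : Prop :=
  gen (Gproc k) (k - i) y /\ dist (Gproc k) y x i.
End Process.

(* Main.v *)
Require Import Defs.
From Stdlib Require Import Relations Classical.
From mathcomp Require Import all_boot.
From mathcomp Require Import zify.

Section Pf.
Set Implicit Arguments. Unset Strict Implicit.
Variables (xi : label -> nat) (delta : label -> label -> bool) (mu : label -> label -> bool).

Definition inv (k : nat) (G : graph) :=
  (forall x, gV G x -> size x <= k) /\
  (forall x y, gE G x y -> [/\ size y = (size x).+1, gV G x & gV G y]).

Lemma walkS_inv A x z k : walk A x z k.+1 -> exists y, A x y /\ walk A y z k.
Proof. by inversion 1; eauto. Qed.
Lemma walk0_inv A x z : walk A x z 0 -> x = z.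
Proof. by inversion 1. Qed.

Lemma adj_sym G x y : adj G x y -> adj G y x.
Proof. by case; [right|left]. Qed.

Lemma tI_rcons m G u j : gen G m u -> Cset xi delta G u j ->
  tI xi delta m G (rcons u j).
Proof. move=> gu cu; split; last by rewrite size_rcons gu.2. by right; exists u, j. Qed.

Lemma Gproc_inv k : inv k (Gproc xi delta mu k).
Proof.
elim: k => [|m [IH1 IH2]]; first by split=> [x /= -> //|x y /=[]].
split.
- move=> x /= [/IH1 H| [u [_ [[_ sx] _ _]]]]; [lia | by rewrite sx].
- move=> x y /= [/IH2 [s gx gy] | [v0 [j [gv cj -> py]]]].
  + by split=> //; left.
  + case: (py) => [[_ sy] _ _].
    split; first by rewrite sy gv.2.
    * by left; exact gv.1.
    * by right; exists (rcons v0 j); split=> //; exact: tI_rcons.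
Qed.

Lemma adj_size k G x y : inv k G -> adj G x y ->
  [/\ size y = (size x).+1 \/ size x = (size y).+1, gV G x & gV G y].
Proof.
move=> [_ I2] [/I2 [s g1 g2]|/I2 [s g1 g2]]; split=> //; by [left|right].
Qed.

Lemma old_edge m G x y : gE (step xi delta mu m G) x y -> size y <> m.+1 -> gE G x y.
Proof. move=> /= [//|[v0 [j [_ _ _ [[_ sy] _ _]]]]] /(_ sy) []. Qed.

Lemma new_edge m G x y : inv m G -> gE (step xi delta mu m G) x y -> size y = m.+1 ->
  exists j, [/\ gen G m x, Cset xi delta G x j & pi_rel xi delta mu m G (rcons x j) y].
Proof.
move=> [I1 I2] /= [/I2 [_ _ /I1] | [v0 [j [gv cj -> py]]]] sy; [lia| by exists j].
Qed.

Lemma O_edge m G x y : adj (tG xi delta m G) x y -> size x <> m.+1 -> size y <> m.+1 ->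
  adj G x y.
Proof.
move=> [] /= [H|[u [j [gu _ e1 e2]]]] sx sy.
- by left.
- by subst; rewrite size_rcons gu.2 in sy.
- by right.
- by subst; rewrite size_rcons gu.2 in sx.
Qed.

Lemma N_edge m G x u : inv m G -> size x = m.+1 -> adj (tG xi delta m G) x u ->
  exists j, x = rcons u j.
Proof.
move=> [I1 I2] sx [] /= [/I2 [_ g1 g2] | [u0 [j [gu _ e1 e2]]]].
- move: (I1 _ g1); lia.
- subst; move: gu => [_ su]; lia.
- move: (I1 _ g2); lia.
- by subst; exists j.
Qed.

Lemma M_walk m G p q j k : inv m G -> gen G m p -> gen G m q -> p <> q ->
  walk (adj (tG xi delta m G)) (rcons p j) (rcons q k) 4 ->
  exists z, [/\ (size z).+1 = m, gV G z, adj G z p & adj G z q].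
Proof.
move=> IG gp gq npq W.
have sr : forall p j, gen G m p -> size (rcons p j) = m.+1.
  by move=> ? ? g; rewrite size_rcons g.2.
case/walkS_inv: W => x1 [a1 /walkS_inv [x2 [a2 /walkS_inv [x3 [a3
  /walkS_inv [x4 [a4 /walk0_inv e4]]]]]]].
subst x4.
have [j1 e1] := N_edge IG (sr _ _ gp) a1.
case: (rcons_inj e1) => ? _; subst x1.
have [j3 e3] := N_edge IG (sr _ _ gq) (adj_sym a4).
case: (rcons_inj e3) => ? _; subst x3.
case: (eqVneq (size x2) m.+1) => s2.
- have [j2 e2] := N_edge IG s2 (adj_sym a2).
  have [j2' e2'] := N_edge IG s2 a3.
  rewrite e2 in e2'; case: (rcons_inj e2') => E _; by case: npq.
- have s2' : size x2 <> m.+1 by apply/eqP.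
  have sp : size p <> m.+1 by rewrite gp.2; lia.
  have sq : size q <> m.+1 by rewrite gq.2; lia.
  have b2 := O_edge a2 sp s2'.
  have b3 := O_edge a3 s2' sq.
  have [ss _ g2] := adj_size IG b2.
  exists x2; split=> //; last exact: adj_sym.
  move: (IG.1 _ g2) ss; rewrite gp.2; lia.
Qed.

End Pf.

Theorem lemma6p1
  (xi : label -> nat) (delta : label -> label -> bool) (mu : label -> label -> bool)
  (mu_sym : forall u v, mu u v = mu v u)
  (n : nat) (v w w' v' : label) :
  3 <= n ->
  gen (Gproc xi delta mu n) n v ->
  gen (Gproc xi delta mu n) n.-1 w ->
  dist (Gproc xi delta mu n) v w 3 ->
  (forall y, ~ (alpha_i xi delta mu n.-1 1 w y /\ alpha_i xi delta mu n 2 v y)) ->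
  adj (Gproc xi delta mu n) v w' ->
  adj (Gproc xi delta mu n) w' v' ->
  adj (Gproc xi delta mu n) v' w ->
  gen (Gproc xi delta mu n) n v' /\
  exists a b c : label,
    [/\ a <> b, a <> c, b <> c &
       [/\ sigma xi delta mu n.-1 (Gproc xi delta mu n.-1) v' a,
           sigma xi delta mu n.-1 (Gproc xi delta mu n.-1) v' b &
           sigma xi delta mu n.-1 (Gproc xi delta mu n.-1) v' c]].
Proof.
case: n => [|m] // n3.
change (m.+1.-1) with m.
set G := Gproc xi delta mu m.
have E : Gproc xi delta mu m.+1 = step xi delta mu m G by [].
rewrite E => gv gw dvw Hal hvw' hw'v' hv'w.
have IG : inv m G := Gproc_inv xi delta mu m.
have IGn : inv m.+1 (step xi delta mu m G) by rewrite -E; exact: Gproc_inv.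
have sv : size v = m.+1 := gv.2.
have sw : size w = m := gw.2.
have contra : forall z, (size z).+1 = m -> gV G z -> adj G z w ->
    adj (step xi delta mu m G) z w' -> False.
  move=> z sz gz azw azw'.
  apply: (Hal z); split.
  - rewrite /alpha_i -/G; split; first by split=> //; lia.
    split; first by econstructor; [exact: azw | constructor].
    move=> jj; rewrite ltnS leqn0 => /eqP -> /walk0_inv ez.
    by move: sz; rewrite ez sw; lia.
  - rewrite /alpha_i E; split; first by split; [left | lia].
    split.
      econstructor; [exact: azw'|econstructor; [exact: (adj_sym hvw')|constructor]].
    case=> [_ /walk0_inv ez| [|//] _ /walkS_inv [y [azy /walk0_inv ey]]].
      by move: sz; rewrite ez sv; lia.
    subst y; have [ss _ _] := adj_size IGn azy.
    by move: ss sz; rewrite sv; lia.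
have [s1 _ g1] := adj_size IGn hvw'.
have sw' : size w' = m by move: (IGn.1 _ g1) s1; rewrite sv; lia.
have [s2 _ g2] := adj_size IGn hw'v'.
have sv' : size v' = m.+1.
  case: s2 => s2; first by rewrite s2 sw'.
  exfalso; apply: (contra v').
  - by rewrite -sw' s2.
  - case: g2 => // [[u [_ [[_ sx] _ _]]]]; move: sx s2; rewrite sw'; lia.
  - have nv : size v' <> m.+1 by rewrite -sw' s2; lia.
    have nw : size w <> m.+1 by rewrite sw; lia.
    case: hv'w => H; [left|right]; exact: old_edge H _.
  - exact: adj_sym.
split; first by split.
have [j [gw' cj pa]] : exists j, [/\ gen G m w', Cset xi delta G w' j &
    pi_rel xi delta mu m G (rcons w' j) v'].
  case: hw'v' => H; first exact: new_edge IG H sv'.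
  have [ss _ _] := IGn.2 _ _ H; move: ss; rewrite sv' sw'; lia.
have [k [gw2 ck pb]] : exists k, [/\ gen G m w, Cset xi delta G w k &
    pi_rel xi delta mu m G (rcons w k) v'].
  case: hv'w => H; last exact: new_edge IG H sv'.
  have [ss _ _] := IGn.2 _ _ H; move: ss; rewrite sv' sw; lia.
have nww : w' <> w.
  move=> ew; case: dvw => _ /(_ 1 isT); apply.
  rewrite -ew; econstructor; [exact: hvw'|constructor].
set a := rcons w' j; set b := rcons w k.
have tia : tI xi delta m G a by exact: tI_rcons.
have tib : tI xi delta m G b by exact: tI_rcons.
have nab : a <> b by move=> /rcons_inj [].
have sav : sim xi delta mu m G a v' by case: pa.
have sbv : sim xi delta mu m G b v' by case: pb.
have sab : sim xi delta mu m G a b by apply: rst_trans sav (rst_sym _ _ _ _ sbv).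
case: (classic (exists c, [/\ tI xi delta m G c, sim xi delta mu m G c a,
   c <> a & c <> b])) => [[c [tic sca nca ncb]]|NC].
  exists a, b, c; split=> //; try by apply: nesym.
  split; split=> //; exact: rst_trans sca sav.
exfalso.
have key : forall x y, clos_refl_sym_trans_1n _ (mrel xi delta mu m G) x y ->
    x = a -> y = b -> mrel xi delta mu m G a b \/ mrel xi delta mu m G b a.
  move=> x y; elim => [x0 -> //|x0 y0 z0 Hxy _ IH ex ez].
  subst x0.
  have ty : tI xi delta m G y0 by case: Hxy => -[].
  have sy : sim xi delta mu m G y0 a.
    by case: Hxy => H; [apply: rst_sym; apply: rst_step | apply: rst_step].
  case: (classic (y0 = b)) => [eb|nb].
    by subst y0; case: Hxy; [left|right].
  case: (classic (y0 = a)) => [ea|na]; first exact: IH.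
  by case: NC; exists y0.
have [M|M] := key a b (clos_rst_rst1n _ _ _ _ sab) erefl erefl.
- case: M => _ _ [W _] _.
  have [z [sz gz az1 az2]] := M_walk IG gw' gw2 nww W.
  apply: (contra z) => //; by case: az1 => H; [left; left | right; left].
- case: M => _ _ [W _] _.
  have [z [sz gz az1 az2]] := M_walk IG gw2 gw' (nesym nww) W.
  apply: (contra z) => //; by case: az2 => H; [left; left | right; left].
Qed.
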